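(* Let $s\ge 1$, $i$ and $j'$ be integers with $s\le i\le 2s$ and $0\le j'\le s$. Then $$\sum_{t=0}^{2s-i}\frac{(-1)^t}{2s-t}\binom{2s-i}{t}\binom{2s-t-1-j'}{s-j'}=\frac{(-1)^{s+i+j'}}{i}\binom{s}{j'}\binom{2s}{i}^{-1}+\sum_{t=1}^{s-j'}\frac{(-1)^{t+1}}{t}\binom{i-j'-1}{s+t-1}\binom{s}{t-1}\binom{s-j'}{t}^{-1}.$$
   Context: For an integer $b\ge 0$ and any integer $a$, $\binom{a}{b}=a(a-1)\cdots(a-b+1)/b!$; in particular $\binom{a}{b}=0$ when $0\le a<b$. An empty sum is $0$. *)

(* Defs.v *)
From HB Require Import structures.
From mathcomp Require Import all_boot all_order all_algebra.
Set Implicit Arguments. Unset Strict Implicit. Unset Printing Implicit Defensive.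
Import Order.TTheory GRing.Theory Num.Theory.
Local Open Scope ring_scope.

Definition binz (a : int) (b : nat) : rat :=
  (\prod_(k < b) (a%:~R - k%:R)) / (b`!)%:R.

(* Main.v *)
Require Import Defs.
From mathcomp Require Import all_boot all_order all_algebra.
From mathcomp Require Import ring lra zify.
Import Order.TTheory GRing.Theory Num.Theory.
Local Open Scope ring_scope.

Definition ff (x : rat) (k : nat) : rat := \prod_(l < k) (x - l%:R).
Definition bq (x : rat) (k : nat) : rat := ff x k / (k`!)%:R.

Lemma binzE a k : binz a k = bq (a%:~R) k.
Proof. by []. Qed.

Lemma ff_nat n k : ff n%:R k = (n ^_ k)%:R.
Proof.
elim: k => [|k IH]; first by rewrite /ff big_ord0.
rewrite /ff big_ord_recr /= -/(ff _ _) IH ffactnSr natrM.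
case: (leqP k n) => hk; first by rewrite natrB.
by rewrite ffact_small // !mul0r.
Qed.

Lemma fact_neq0 k : (k`!)%:R != 0 :> rat.
Proof. by rewrite pnatr_eq0 -lt0n fact_gt0. Qed.

Lemma bq_nat n k : bq n%:R k = ('C(n, k))%:R.
Proof.
rewrite /bq ff_nat -bin_ffact natrM mulfK //; exact: fact_neq0.
Qed.

Lemma bq0 x : bq x 0 = 1.
Proof. by rewrite /bq /ff big_ord0 divr1. Qed.

Lemma bq_pascal x k : bq (x + 1) k.+1 = bq x k.+1 + bq x k.
Proof.
rewrite /bq /ff big_ord_recl big_ord_recr /=.
have -> : \prod_(i < k) (x + 1 - (bump 0 i)%:R) = \prod_(i < k) (x - i%:R).
  by apply: eq_bigr => i _; rewrite /bump /= add1n -addn1 natrD; ring.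
rewrite factS natrM.
have h1 := fact_neq0 k.
have h2 : (k.+1)%:R != 0 :> rat by rewrite pnatr_eq0.
field; by rewrite h1 addrC natr1 h2.
Qed.

Lemma alt_step (f : nat -> rat) n :
  \sum_(t < n.+2) (-1) ^+ t * ('C(n.+1, t))%:R * f t
  = \sum_(t < n.+1) (-1) ^+ t * ('C(n, t))%:R * (f t - f t.+1).
Proof.
rewrite big_ord_recl /=.
under eq_bigr => t _ do rewrite /bump /= add1n binS natrD mulrDr mulrDl.
rewrite big_split /= addrA.
have -> : (-1) ^+ 0 * ('C(n.+1, 0))%:R * f 0%N
   + \sum_(i < n.+1) (-1) ^+ i.+1 * ('C(n, i.+1))%:R * f i.+1
   = \sum_(t < n.+1) (-1) ^+ t * ('C(n, t))%:R * f t.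
  symmetry; rewrite big_ord_recl /= bin0 -(bin0 n.+1); congr (_ + _).
  rewrite [X in _ = X]big_ord_recr /= bin_small // mulr0 mul0r addr0.
  by apply: eq_bigr => t _; rewrite /bump /= add1n.
rewrite -big_split /=; apply: eq_bigr => t _.
rewrite exprS; ring.
Qed.

Lemma alt_bq n (A : rat) r :
  \sum_(t < n.+1) (-1) ^+ t * ('C(n, t))%:R * bq (A - t%:R) r
  = if (n <= r)%N then bq (A - n%:R) (r - n) else 0.
Proof.
elim: n A r => [|n IH] A r.
  by rewrite big_ord1 /= subn0 bin0 expr0 !mul1r subr0.
rewrite (alt_step (fun t => bq (A - t%:R) r)) /=.
case: r => [|r].
  under eq_bigr => t _ do rewrite !bq0 subrr mulr0.
  by rewrite big1.
have E : forall t : nat, bq (A - t%:R) r.+1 - bq (A - t.+1%:R) r.+1 = bq ((A - 1) - t%:R) r.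
  move=> t; rewrite -natr1.
  have h : A - t%:R = (A - (t%:R + 1)) + 1 by ring.
  rewrite h bq_pascal.
  have -> : A - 1 - t%:R = A - (t%:R + 1) by ring.
  ring.
under eq_bigr => t _ do rewrite E.
rewrite IH ltnS subSS.
case: (n <= r)%N => //.
congr bq; rewrite -natr1; ring.
Qed.

Lemma ffS_r a n : ff a n.+1 = ff a n * (a - n%:R).
Proof. by rewrite /ff big_ord_recr. Qed.

Lemma ffS_l a n : ff a n.+1 = a * ff (a - 1) n.
Proof.
rewrite /ff big_ord_recl subr0; congr (_ * _); apply: eq_bigr => i _.
by rewrite lift0 -natr1; ring.
Qed.

Lemma ff_neq0 a n : (forall k, (k < n)%N -> a - k%:R != 0) -> ff a n != 0.
Proof. by move=> h; apply/prodf_neq0 => i _; apply: h. Qed.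

Lemma alt_inv n (a : rat) :
  (forall k, (k <= n)%N -> a - k%:R != 0) ->
  \sum_(t < n.+1) (-1) ^+ t * ('C(n, t))%:R * (a - t%:R)^-1
  = (-1) ^+ n * (n`!)%:R / ff a n.+1.
Proof.
elim: n a => [|n IH] a h.
  by rewrite big_ord1 /= /ff big_ord1 /= !mul1r subr0.
rewrite (alt_step (fun t => (a - t%:R)^-1)) /=.
have E : forall t : nat, (a - t%:R)^-1 - (a - t.+1%:R)^-1 = (a - t%:R)^-1 - ((a - 1) - t%:R)^-1.
  by move=> t; rewrite -natr1; congr (_ - _^-1); ring.
under eq_bigr => t _ do rewrite E mulrBr.
rewrite sumrB IH; last by move=> k hk; apply: h; apply: leqW.
rewrite IH; last first.
  move=> k hk; have -> : a - 1 - k%:R = a - k.+1%:R by rewrite -natr1; ring.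
  exact: h.
have hP : ff a n.+1 != 0 by apply: ff_neq0 => k hk; apply: h; lia.
have hn : a - n.+1%:R != 0 by apply: h.
have ha : a != 0 by have := h 0%N isT; rewrite subr0.
have e1 := ffS_r a n.+1.
have e2 := ffS_l a n.+1.
have e3 : ff (a - 1) n.+1 = ff a n.+1 * (a - n.+1%:R) / a.
  by rewrite -e1 e2 mulrC mulrA mulVf // mul1r.
rewrite e3 e1 factS natrM exprS.
rewrite -natr1 in hn *.
field.
by rewrite hP hn ha.
Qed.

Lemma telescope (f g : nat -> rat) m :
  \prod_(l < m) f l - \prod_(l < m) g l
  = \sum_(t < m) (\prod_(l < t) f l) * (f t - g t) * \prod_(t.+1 <= l < m) g l.
Proof.
elim: m => [|m IH]; first by rewrite !big_ord0 subrr.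
rewrite !big_ord_recr /= big_geq // mulr1.
have -> : \sum_(i < m) (\prod_(l < i) f l) * (f i - g i) * \prod_(i.+1 <= l < m.+1) g l
   = (\sum_(i < m) (\prod_(l < i) f l) * (f i - g i) * \prod_(i.+1 <= l < m) g l) * g m.
  rewrite mulr_suml; apply: eq_bigr => i _.
  by rewrite big_nat_recr //= mulrA.
rewrite -IH; ring.
Qed.

Lemma prod_neg k (y : rat) : \prod_(l < k) (l%:R - y) = (-1) ^+ k * ff y k.
Proof.
elim: k => [|k IH]; first by rewrite /ff !big_ord0 expr0 mulr1.
by rewrite big_ord_recr /= IH ffS_r exprS; ring.
Qed.

Lemma prod_seg (m t : nat) (y : rat) : (t < m)%N ->
  \prod_(t.+1 <= l < m) ((m%:R - 1 - y) - l%:R) = (-1) ^+ (m - t.+1) * ff y (m - t.+1).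
Proof.
move=> htm.
rewrite big_nat_rev -{1}(add0n t.+1) big_addn big_mkord.
rewrite -prod_neg.
apply: eq_bigr => i _.
have hi : (i < m - t.+1)%N := ltn_ord i.
have -> : (0 + t.+1 + m - (i + t.+1).+1 = m - i.+1)%N by lia.
rewrite natrB; last by lia.
rewrite -natr1; ring.
Qed.

Definition cc (s m t : nat) : rat :=
  (-1) ^+ (t + 1) / t%:R * bq s%:R (t - 1) / bq m%:R t.

Lemma term_id (s t k : nat) (z D : rat) :
  ff z t * D * ((-1) ^+ k * ff s%:R k)
  = D * ((t + k.+1)`!)%:R * (cc s (t + k.+1) k.+1 * bq z t).
Proof.
rewrite /cc (bq_nat (t + k.+1)) /bq subn1 /=.
have hb := bin_fact (leq_addl t k.+1).
rewrite addnK in hb.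
have e : ((t + k.+1)`!)%:R = ('C(t + k.+1, k.+1))%:R * ((k.+1)`!)%:R * (t`!)%:R :> rat.
  by rewrite -!natrM -hb mulnA.
rewrite e factS natrM.
have h1 := fact_neq0 k.
have h2 := fact_neq0 t.
have h3 : ('C(t + k.+1, k.+1))%:R != 0 :> rat by rewrite pnatr_eq0 -lt0n bin_gt0 leq_addl.
have h4 : (k.+1)%:R != 0 :> rat by rewrite pnatr_eq0.
rewrite addn1 !exprS mulN1r mulN1r opprK.
field.
by rewrite h1 h2 h3 addrC natr1 h4.
Qed.

Lemma poly_id (s m : nat) (x : rat) :
  bq (s%:R + m%:R - 1 - x) m
  = bq (m%:R - 1 - s%:R) m + (2 * s%:R - x) *
      \sum_(1 <= t < m.+1) cc s m t * bq (s%:R + m%:R - 1 - x) (m - t).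
Proof.
set z := s%:R + m%:R - 1 - x.
set w := m%:R - 1 - s%:R.
have tel := telescope (fun l => z - l%:R) (fun l => w - l%:R) m.
rewrite -/(ff z m) -/(ff w m) in tel.
have hm := fact_neq0 m.
suff : ff z m - ff w m = (2 * s%:R - x) * (m`!)%:R *
      \sum_(1 <= t < m.+1) cc s m t * bq z (m - t).
  move=> H; rewrite /bq in H *.
  have -> : ff z m = ff w m + (ff z m - ff w m) by ring.
  rewrite H; field; exact: hm.
rewrite tel.
rewrite big_add1 /= big_nat_rev big_mkord mulr_sumr.
apply: eq_bigr => [[t ht]] _ /=.
rewrite add0n prod_seg // (_ : (m - (m - t.+1).+1 = t)%N); last by lia.
have -> : z - t%:R - (w - t%:R) = 2 * s%:R - x by rewrite /z /w; ring.
have [k hk] : exists k, m = (t + k.+1)%N by exists (m - t.+1)%N; lia.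
rewrite hk (_ : (t + k.+1 - t.+1 = k)%N); last by lia.
exact: term_id.
Qed.

Lemma binz_nat n k : binz n%:Z k = ('C(n, k))%:R.
Proof. by rewrite binzE -pmulrn bq_nat. Qed.

Lemma ff_neg m (y : rat) : ff (m%:R - 1 - y) m = (-1) ^+ m * ff y m.
Proof.
rewrite -prod_neg.
elim: m => [|m IH]; first by rewrite /ff !big_ord0.
rewrite ffS_l big_ord_recr /=.
have -> : m.+1%:R - 1 - y - 1 = m%:R - 1 - y by rewrite -natr1; ring.
rewrite IH -natr1; ring.
Qed.

Theorem proposition2 (s i j : nat) :
  (1 <= s)%N -> (s <= i)%N -> (i <= 2 * s)%N -> (j <= s)%N ->
  \sum_(0 <= t < (2 * s - i).+1)
     (-1) ^+ t / (2 * s - t)%:R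
       * binz (2 * s - i)%:Z t
       * binz (2 * (s : int) - t%:Z - 1 - j%:Z) (s - j)
  = (-1) ^+ (s + i + j) / i%:R * binz s j / binz (2 * s)%:Z i
    + \sum_(1 <= t < (s - j).+1)
        (-1) ^+ (t + 1) / t%:R
          * binz (i%:Z - j%:Z - 1) (s + t - 1)
          * binz s (t - 1) / binz (s - j)%:Z t.
Proof.
move=> hs hsi hi2 hjs.
set n := (2 * s - i)%N.
set m := (s - j)%N.
have hns : (n <= s)%N by rewrite /n; lia.
have ei : i%:R = 2 * s%:R - n%:R :> rat.
  by rewrite /n natrB // natrM; ring.
have ej : j%:R = s%:R - m%:R :> rat.
  by rewrite /m natrB //; ring.
set z := fun t : nat => s%:R + m%:R - 1 - t%:R : rat.
set P0 := bq (m%:R - 1 - s%:R) m.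
set Q := fun t : nat => \sum_(1 <= t' < m.+1) cc s m t' * bq (z t) (m - t').
have LHSe : \sum_(0 <= t < n.+1)
     (-1) ^+ t / (2 * s - t)%:R * binz n%:Z t
       * binz (2 * (s : int) - t%:Z - 1 - j%:Z) m
   = P0 * \sum_(t < n.+1) (-1) ^+ t * ('C(n, t))%:R * ((2 * s%:R) - t%:R)^-1
     + \sum_(t < n.+1) (-1) ^+ t * ('C(n, t))%:R * Q t.
  rewrite big_mkord mulr_sumr -big_split /=.
  apply: eq_bigr => [[t ht]] _ /=.
  have htn : (t <= 2 * s)%N by lia.
  rewrite binz_nat binzE.
  have -> : (2 * (s : int) - t%:Z - 1 - j%:Z)%:~R = z t.
    rewrite /z !intrB intrM -!pmulrn ej; ring.
  rewrite /Q /z poly_id -/(z t) natrB // natrM.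
  have hnz : 2 * s%:R - t%:R != 0 :> rat.
    rewrite -natrM -natrB // pnatr_eq0; lia.
  rewrite -/P0; set S := \sum_(1 <= _ < m.+1) _.
  field; exact: hnz.
rewrite LHSe.
rewrite alt_inv; last first.
  move=> k hk; rewrite -natrM -natrB; last by lia.
  rewrite pnatr_eq0; lia.
have SW : \sum_(t < n.+1) (-1) ^+ t * ('C(n, t))%:R * Q t
   = \sum_(1 <= t' < m.+1) cc s m t' *
       (if (n <= m - t')%N then bq (s%:R + m%:R - 1 - n%:R) (m - t' - n) else 0).
  rewrite /Q.
  under eq_bigr => t _ do rewrite mulr_sumr.
  rewrite exchange_big /=.
  apply: eq_bigr => t' _.
  rewrite -alt_bq mulr_sumr; apply: eq_bigr => t _.
  rewrite /z; ring.
rewrite SW; congr (_ + _).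
  rewrite /P0 /bq ff_neg ff_nat -bin_ffact -natrM ff_nat ffactnSr -bin_ffact.
  rewrite (_ : (2 * s - n = i)%N); last by rewrite /n; lia.
  rewrite !binz_nat (_ : j = (s - m)%N); last by rewrite /m; lia.
  rewrite bin_sub; last by rewrite /m; lia.
  have e : 'C(2 * s, n) = 'C(2 * s, i) by rewrite /n bin_sub.
  rewrite e.
  rewrite (_ : (s + i + (s - m) = (n + m) + 2 * (2 * s - n - m))%N); last by rewrite /m /n; lia.
  rewrite exprD exprM sqrrN expr1n mulr1 exprD.
  have h1 := fact_neq0 m.
  have h2 := fact_neq0 n.
  have h3 : ('C(2 * s, i))%:R != 0 :> rat by rewrite pnatr_eq0 -lt0n bin_gt0; lia.
  have h4 : i%:R != 0 :> rat by rewrite pnatr_eq0; lia.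
  rewrite !natrM.
  field.
  by rewrite h1 h2 h3 h4.
apply: eq_big_nat => t /andP [ht1 ht2].
have hnd : (n + i = 2 * s)%N by rewrite /n; lia.
have hmd : (m + j = s)%N by rewrite /m; lia.
clearbody n m.
have hm1 : (1 <= m)%N by lia.
set N := (s + m - n - 1)%N.
have eN : (i%:Z - j%:Z - 1)%:~R = N%:R :> rat.
  rewrite !intrB -!pmulrn /N natrB; last by lia.
  rewrite natrB; last by lia.
  rewrite natrD ei ej; ring.
have eN2 : s%:R + m%:R - 1 - n%:R = N%:R :> rat.
  rewrite /N natrB; last by lia.
  rewrite natrB; last by lia.
  rewrite natrD; ring.
rewrite binzE eN bq_nat !binz_nat /cc !bq_nat eN2.
have -> : (if (n <= m - t)%N then bq N%:R (m - t - n) else 0) = ('C(N, s + t - 1))%:R.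
  case: ifP => hc.
    rewrite bq_nat (_ : (m - t - n = N - (s + t - 1))%N); last by rewrite /N; lia.
    by rewrite bin_sub // /N; lia.
  rewrite bin_small // /N; lia.
ring.
Qed.
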